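(* Let $X\subseteq\mathbb{P}^n$ be a real non-degenerate closed subscheme and let $p\geq 1$ be an integer. If $X$ satisfies the $p$-base-point-free property, then the Hankel index satisfies $\eta(X)\geq p+1$.
   Context: Let $S=\mathbb{R}[x_0,\dots,x_n]$, $S_d$ its degree-$d$ part. For a closed subscheme $X\subseteq\mathbb{P}^n$ over $\mathbb{R}$ (points taken over $\mathbb{C}$, real points $X(\mathbb{R})$), $I=I(X)\subseteq S$ is its saturated homogeneous ideal and $R=S/I$ its homogeneous coordinate ring. $X$ is non-degenerate if it is not contained in a hyperplane. $\Sigma_X\subseteq R_2$ is the cone of sums of squares of elements of $R_1$ and $\Sigma_X^*\subseteq R_2^*$ its dual cone, regarded inside $S_2^*$ via the dual of the quotient map $S_2\to R_2$. For $\ell\in S_2^*$ let $B_\ell$ be the symmetric bilinear form $(f,g)\mapsto \ell(fg)$ on $S_1$; the rank of $\ell$ is the rank of $B_\ell$. With $S_+$ the cone of $\ell\in S_2^*$ with $B_\ell$ positive semidefinite, $\Sigma_X^*=S_+\cap I_2^\perp$ (the Hankel spectrahedron of $X$). The rank of an extreme ray is the rank of any nonzero element spanning it. The Hankel index $\eta(X)$ is the smallest integer $p>1$ such that $\Sigma_X^*$ has an extreme ray of rank $p$; $\eta(X)=\infty$ if all extreme rays of $\Sigma_X^*$ have rank $1$. A linear series is a vector subspace $W\subseteq R_1$; it is base-point-free on $X$ if the forms in $W$ have no common zero on $X$ (over $\mathbb{C}$). $X$ satisfies the $p$-base-point-free property if for every base-point-free linear series $W\subseteq R_1$ of codimension at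 most $p$ in $R_1$, the ideal of $R$ generated by $W$ contains $R_2$. *)

(* Defs.v *)
From HB Require Import structures.
From mathcomp Require Import all_boot all_order all_algebra.
Set Implicit Arguments. Unset Strict Implicit. Unset Printing Implicit Defensive.
Import Order.TTheory GRing.Theory Num.Theory.
Local Open Scope ring_scope.

(* mpoly R m = R[x_0, ..., x_{m-1}], with x_{m-1} the outermost variable. *)
Fixpoint mpoly (R : comNzRingType) (m : nat) : comNzRingType :=
  match m with
  | 0 => R
  | k.+1 => ({poly mpoly R k} : comNzRingType)
  end.

Fixpoint mconst (R : comNzRingType) (m : nat) : R -> mpoly R m :=
  match m return R -> mpoly R m with
  | 0 => fun c => c
  | k.+1 => fun c => (@mconst R k c)%:P
  end.

Fixpoint mvar (R : comNzRingType) (m : nat) (i : nat) : mpoly R m :=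
  match m return mpoly R m with
  | 0 => 0
  | k.+1 => if i == k then 'X else (@mvar R k i)%:P
  end.

Fixpoint hcomp (R : comNzRingType) (m : nat) (d : nat) : mpoly R m -> mpoly R m :=
  match m return mpoly R m -> mpoly R m with
  | 0 => fun p => if d == 0%N then p else 0
  | k.+1 => fun p : {poly mpoly R k} =>
      \poly_(i < size p) (if (i <= d)%N then @hcomp R k (d - i)%N p`_i else 0)
  end.

(* p is homogeneous of degree d (the zero polynomial is homogeneous of every degree) *)
Definition mhomog (R : comNzRingType) (m d : nat) (p : mpoly R m) : Prop :=
  hcomp d p = p.

Fixpoint meval (R : comNzRingType) (C : comNzRingType) (phi : R -> C)
    (m : nat) (z : nat -> C) : mpoly R m -> C :=
  match m return mpoly R m -> C with
  | 0 => fun c => phi c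
  | k.+1 => fun p : {poly mpoly R k} => \sum_(i < size p) @meval R C phi k z p`_i * z k ^+ i
  end.

Section Proj.
Variables (R : rcfType) (n : nat).

Definition Spoly := mpoly R n.+1.
Definition xv (i : nat) : Spoly := mvar R n.+1 i.

(* the linear form sum_i a_i x_i attached to a coefficient vector a (S_1 = R^(n+1)) *)
Definition linform (a : 'rV[R]_n.+1) : Spoly :=
  \sum_(i < n.+1) mconst n.+1 (a 0 i) * xv i.

Definition is_ideal (I : Spoly -> Prop) : Prop :=
  [/\ I 0, (forall f g, I f -> I g -> I (f + g)) & (forall f g, I f -> I (g * f))].

Definition is_homogeneous_ideal (I : Spoly -> Prop) : Prop :=
  is_ideal I /\ (forall f d, I f -> I (hcomp d f)).

(* m^k, m = (x_0,...,x_n): polynomials with no monomial of degree < k *)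
Definition in_irrel_pow (k : nat) (g : Spoly) : Prop :=
  forall d, (d < k)%N -> hcomp d g = 0.

(* I is saturated: (I : m^infty) = I *)
Definition is_saturated (I : Spoly -> Prop) : Prop :=
  forall f, (exists k, forall g, in_irrel_pow k g -> I (f * g)) -> I f.

(* I is the (saturated homogeneous) ideal I(X) of a closed subscheme X of P^n;
   closed subschemes correspond bijectively to such ideals *)
Definition is_subscheme_ideal (I : Spoly -> Prop) : Prop :=
  is_homogeneous_ideal I /\ is_saturated I.

(* X non-degenerate: no nonzero linear form in I(X), i.e. I_1 = 0 *)
Definition nondegenerate_scheme (I : Spoly -> Prop) : Prop :=
  forall a : 'rV[R]_n.+1, I (linform a) -> a = 0.

Definition point_of (C : closedFieldType) (phi : {rmorphism R -> C})
    (I : Spoly -> Prop) (z : 'I_n.+1 -> C) : Prop :=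
  (exists i, z i != 0) /\
  forall f, I f -> @meval _ _ phi n.+1 (fun k => if (k < n.+1)%N then z (inord k) else 0) f = 0.

(* a linear series W (a subspace of R_1 = S_1) is base-point-free on X over C *)
Definition base_point_free (C : closedFieldType) (phi : {rmorphism R -> C})
    (I : Spoly -> Prop) (W : {vspace 'rV[R]_n.+1}) : Prop :=
  forall z, point_of phi I z ->
    exists2 w, w \in W &
      @meval _ _ phi n.+1 (fun k => if (k < n.+1)%N then z (inord k) else 0) (linform w) != 0.

(* the ideal of R = Spoly/I generated by W contains R_2, i.e. S_2 is contained in (W) + I *)
Definition ideal_gen_contains_R2 (I : Spoly -> Prop) (W : {vspace 'rV[R]_n.+1}) : Prop :=
  forall q : Spoly, mhomog 2 q ->
    exists s : seq ('rV[R]_n.+1 * Spoly),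
      (forall t, t \in s -> t.1 \in W) /\
      I (q - \sum_(t <- s) linform t.1 * t.2).

(* p-base-point-free property (R_1 = S_1 since X is non-degenerate) *)
Definition p_bpf_property (C : closedFieldType) (phi : {rmorphism R -> C})
    (I : Spoly -> Prop) (p : nat) : Prop :=
  forall W : {vspace 'rV[R]_n.+1},
    (n.+1 - \dim W <= p)%N -> base_point_free phi I W -> ideal_gen_contains_R2 I W.

(* an element of S_2^* is represented by a map Spoly -> R that is linear on S_2;
   only its values on S_2 matter (equality of functionals is eq2) *)
Definition hom2 (q : Spoly) : Prop := mhomog 2 q.

Definition is_dual2 (l : Spoly -> R) : Prop :=
  (forall q1 q2, hom2 q1 -> hom2 q2 -> l (q1 + q2) = l q1 + l q2) /\
  (forall c q, hom2 q -> l (mconst n.+1 c * q) = c * l q).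

Definition eq2 (l1 l2 : Spoly -> R) : Prop := forall q, hom2 q -> l1 q = l2 q.

(* matrix of the bilinear form B_l on S_1 in the basis x_0,...,x_n *)
Definition Bmx (l : Spoly -> R) : 'M[R]_n.+1 := \matrix_(i, j) l (xv i * xv j).

Definition rank_of (l : Spoly -> R) : nat := \rank (Bmx l).

(* Sigma_X^* : dual cone of the cone of sums of squares of linear forms in R_2,
   regarded inside S_2^* (functionals vanishing on I_2) *)
Definition in_sos_dual (I : Spoly -> Prop) (l : Spoly -> R) : Prop :=
  [/\ is_dual2 l,
      (forall q, hom2 q -> I q -> l q = 0) &
      (forall s : seq 'rV[R]_n.+1, 0 <= l (\sum_(a <- s) linform a ^+ 2))].

Definition extreme_ray (I : Spoly -> Prop) (l : Spoly -> R) : Prop :=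
  [/\ in_sos_dual I l,
      ~ eq2 l (fun _ => 0) &
      (forall l1 l2, in_sos_dual I l1 -> in_sos_dual I l2 ->
         eq2 l (fun q => l1 q + l2 q) ->
         exists2 c, 0 <= c & eq2 l1 (fun q => c * l q))].

(* eta(X) >= k, where eta(X) = min {r > 1 | Sigma_X^* has an extreme ray of rank r}
   (and eta(X) = infinity if there is none) *)
Definition hankel_index_ge (I : Spoly -> Prop) (k : nat) : Prop :=
  forall r : nat, (1 < r)%N ->
    (exists l, extreme_ray I l /\ rank_of l = r) -> (k <= r)%N.

End Proj.

(* Main.v *)
Require Import Defs.
From HB Require Import structures.
From mathcomp Require Import all_boot all_order all_algebra.
From mathcomp Require Import zify ring lra.
From Stdlib Require Import Classical ClassicalEpsilon.
Set Implicit Arguments. Unset Strict Implicit. Unset Printing Implicit Defensive.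
Import Order.TTheory GRing.Theory Num.Theory.
Local Open Scope ring_scope.

Section P.
Variable R : comNzRingType.

Lemma hcomp0 m d : @hcomp R m d 0 = 0.
Proof. by case: m => [|k] /=; [case: eqP | rewrite size_poly0 poly_def big_ord0]. Qed.

Lemma coef_hcomp k d (p : mpoly R k.+1) j :
  (@hcomp R k.+1 d p)`_j = if (j <= d)%N then @hcomp R k (d - j) p`_j else 0.
Proof.
rewrite /= coef_poly; case: ltnP => // hj.
by rewrite nth_default // hcomp0; case: ifP.
Qed.

Lemma hcompD m d (f g : mpoly R m) : hcomp d (f + g) = hcomp d f + hcomp d g.
Proof.
elim: m d f g => [|k IH] d f g; first by rewrite /=; case: eqP; rewrite ?addr0.
apply/polyP => j; rewrite coefD !coef_hcomp coefD.
by case: ifP => _; rewrite ?IH ?addr0.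
Qed.

Lemma hcompN m d (f : mpoly R m) : hcomp d (- f) = - hcomp d f.
Proof. by apply/eqP; rewrite -subr_eq0 opprK -hcompD addNr hcomp0. Qed.

Lemma hcompB m d (f g : mpoly R m) : hcomp d (f - g) = hcomp d f - hcomp d g.
Proof. by rewrite hcompD hcompN. Qed.

Lemma hcomp_sum m d (I : Type) (s : seq I) (F : I -> mpoly R m) :
  hcomp d (\sum_(t <- s) F t) = \sum_(t <- s) hcomp d (F t).
Proof.
elim: s => [|a s IH]; first by rewrite !big_nil hcomp0.
by rewrite !big_cons hcompD IH.
Qed.

Lemma mconst_poly k c : mconst k.+1 c = (@mconst R k c)%:P. Proof. by []. Qed.

Lemma hcompC m d c (f : mpoly R m) : hcomp d (mconst m c * f) = mconst m c * hcomp d f.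
Proof.
elim: m d f => [|k IH] d f; first by rewrite /=; case: eqP; rewrite ?mulr0.
apply/polyP => j; rewrite mconst_poly coefCM !coef_hcomp coefCM.
by case: ifP => _; rewrite ?IH ?mulr0.
Qed.

Lemma hcompK m d (f : mpoly R m) : hcomp d (hcomp d f) = hcomp d f.
Proof.
elim: m d f => [|k IH] d f; first by rewrite /=; case: eqP.
apply/polyP => j; rewrite !coef_hcomp.
by case: (j <= d)%N; rewrite ?IH ?hcomp0.
Qed.

Lemma hcomp_const m c : hcomp 0 (mconst m c) = mconst m c :> mpoly R m.
Proof.
elim: m => [|k IH] //; apply/polyP => j; rewrite coef_hcomp mconst_poly coefC.
by case: j => [|j] //=; rewrite IH.
Qed.

Lemma mvar_last k : mvar R k.+1 k = 'X.
Proof. by rewrite /= eqxx. Qed.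

Lemma mvar_lt k i : (i < k)%N -> mvar R k.+1 i = (mvar R k i)%:P.
Proof. by move=> h; rewrite /= ifN // neq_ltn h. Qed.

Lemma hcompX m i d (f : mpoly R m) : (i < m)%N ->
  hcomp d.+1 (mvar R m i * f) = mvar R m i * hcomp d f /\
  hcomp 0 (mvar R m i * f) = 0.
Proof.
elim: m i d f => [|k IH] i d f //; rewrite ltnS leq_eqVlt => /orP[/eqP->|hi].
  rewrite mvar_last; split; apply/polyP => j; rewrite coef_hcomp coefXM ?coefXM.
    case: j => [|j] /=; first by rewrite hcomp0.
    by rewrite coef_hcomp ltnS subSS.
  by case: j => [|j] /=; rewrite coef0 ?hcomp0.
rewrite mvar_lt //; split; apply/polyP => j; rewrite coef_hcomp coefCM ?coefCM.
  rewrite coef_hcomp; case: (leqP j d) => hjd.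
    by rewrite (leq_trans hjd (leqnSn d)) subSn // (proj1 (IH _ _ _ hi)).
  rewrite mulr0; case: (eqVneq j d.+1) => [->|hne].
    by rewrite leqnn subnn (proj2 (IH _ d _ hi)).
  by have -> : (j <= d.+1)%N = false by lia.
by case: j => [|j] //=; rewrite coef0 // (proj2 (IH _ d _ hi)).
Qed.

Lemma hom_coef k d (p : mpoly R k.+1) : mhomog d p ->
  forall j, p`_j = if (j <= d)%N then hcomp (d - j) p`_j else 0.
Proof. by move=> hp j; rewrite -{1}hp coef_hcomp. Qed.

Lemma hom0_const m (u : mpoly R m) : mhomog 0 u -> exists c, u = mconst m c.
Proof.
elim: m u => [|k IH] u hu; first by exists u.
have h0 : mhomog 0 (u`_0 : mpoly R k).
  by have := hom_coef hu 0; rewrite leqnn subnn => e; rewrite /mhomog -e.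
have [c hc] := IH _ h0; exists c; rewrite mconst_poly -hc.
apply/polyP => j; rewrite coefC (hom_coef hu j); by case: j.
Qed.

Lemma homC k d (h : mpoly R k) : mhomog d h -> mhomog d (h%:P : mpoly R k.+1).
Proof.
move=> hh; apply/polyP => j; rewrite coef_hcomp coefC.
by case: j => [|j] /=; rewrite ?subn0 ?hh //; case: ifP; rewrite ?hcomp0.
Qed.

Lemma hom_decomp m d (u : mpoly R m) : mhomog d.+1 u ->
  exists h : nat -> mpoly R m, (forall i, mhomog d (h i)) /\
    u = \sum_(i < m) mvar R m i * h i.
Proof.
elim: m u => [|k IH] u hu.
  exists (fun _ => 0); split => [i|]; first by rewrite /mhomog hcomp0.
  by rewrite big_ord0 -hu.
have h0 : mhomog d.+1 (u`_0 : mpoly R k).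
  by have := hom_coef hu 0; rewrite leq0n subn0 => e; rewrite /mhomog -e.
have [h [hh hs]] := IH _ h0.
pose u' : mpoly R k.+1 := \poly_(j < size u) u`_j.+1.
have hu' : mhomog d u'.
  apply/polyP => j; rewrite coef_hcomp /u' coef_poly.
  have e : forall j, (if (j < size u)%N then u`_j.+1 else 0) = u`_j.+1.
    by move=> l; case: ltnP => // hl; rewrite nth_default // (leq_trans hl).
  rewrite !e (hom_coef hu j.+1) ltnS subSS.
  by case: (j <= d)%N; rewrite ?hcompK.
exists (fun i => if (i < k)%N then (h i)%:P else u'); split.
  by move=> i; case: ifP => _ //; apply: homC.
rewrite big_ord_recr /= ltnn eqxx.
have -> : \sum_(i < k) (if (i : nat) == k then 'X else (mvar R k i)%:P) *
     (if (i < k)%N then (h i)%:P else u') = (u`_0)%:P.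
  rewrite hs rmorph_sum; apply: eq_bigr => i _.
  by rewrite ltn_ord (ltn_eqF (ltn_ord i)) rmorphM.
apply/polyP => j; rewrite coefD coefXM coefC /u' coef_poly.
case: j => [|j] /=; first by rewrite addr0.
rewrite add0r; case: ltnP => // hl; rewrite nth_default //.
by rewrite (leq_trans hl).
Qed.

Lemma mconstD m a b : mconst m (a + b) = mconst m a + mconst m b :> mpoly R m.
Proof. by elim: m => [|k IH] //=; rewrite IH polyCD. Qed.
Lemma mconstM m a b : mconst m (a * b) = mconst m a * mconst m b :> mpoly R m.
Proof. by elim: m => [|k IH] //=; rewrite IH polyCM. Qed.
Lemma mconst0 m : mconst m 0 = 0 :> mpoly R m.
Proof. by elim: m => [|k IH] //=; rewrite IH. Qed.
Lemma mconst1 m : mconst m 1 = 1 :> mpoly R m.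
Proof. by elim: m => [|k IH] //=; rewrite IH. Qed.
Lemma mconstN m a : mconst m (- a) = - mconst m a :> mpoly R m.
Proof. by elim: m => [|k IH] //=; rewrite IH polyCN. Qed.

Section Eval.
Variables (C : comNzRingType) (phi : {rmorphism R -> C}) (z : nat -> C).

Lemma meval_poly k (p : mpoly R k.+1) :
  meval phi z p = (map_poly (@meval R C phi k z) p).[z k].
Proof.
rewrite (@horner_coef_wide _ (size p)); last by rewrite size_poly.
by apply: eq_bigr => i _; rewrite coef_poly ltn_ord.
Qed.

Lemma meval0 m : meval phi z (0 : mpoly R m) = 0.
Proof. by case: m => [|k] /=; rewrite ?rmorph0 // size_poly0 big_ord0. Qed.

Lemma mevalD m (f g : mpoly R m) : meval phi z (f + g) = meval phi z f + meval phi z g.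
Proof.
elim: m f g => [|k IH] f g; first by rewrite /= rmorphD.
rewrite !meval_poly -hornerD; congr (_.[_]); apply/polyP => i.
by rewrite coefD !coef_map_id0 ?meval0 // coefD IH.
Qed.

Lemma mevalN m (f : mpoly R m) : meval phi z (- f) = - meval phi z f.
Proof. by apply/eqP; rewrite -subr_eq0 opprK -mevalD addNr meval0. Qed.

Lemma mevalB m (f g : mpoly R m) : meval phi z (f - g) = meval phi z f - meval phi z g.
Proof. by rewrite mevalD mevalN. Qed.

Lemma meval_sum m (I : Type) (s : seq I) (F : I -> mpoly R m) :
  meval phi z (\sum_(t <- s) F t) = \sum_(t <- s) meval phi z (F t).
Proof.
elim: s => [|a s IH]; first by rewrite !big_nil meval0.
by rewrite !big_cons mevalD IH.
Qed.

Lemma mevalM m (f g : mpoly R m) : meval phi z (f * g) = meval phi z f * meval phi z g.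
Proof.
elim: m f g => [|k IH] f g; first by rewrite /= rmorphM.
rewrite !meval_poly -hornerM; congr (_.[_]); apply/polyP => i.
rewrite coefM !coef_map_id0 ?meval0 // coefM.
rewrite meval_sum.
by apply: eq_bigr => j _; rewrite IH !coef_map_id0 ?meval0.
Qed.

Lemma meval_polyC k (c : mpoly R k) :
  meval phi z (c%:P : mpoly R k.+1) = meval phi z c.
Proof.
rewrite [LHS]/= size_polyC; case: (eqVneq c 0) => [->|_] /=.
  by rewrite big_ord0 meval0.
by rewrite big_ord1 coefC /= expr0 mulr1.
Qed.

Lemma meval_const m c : meval phi z (mconst m c) = phi c.
Proof.
elim: m => [|k IH] //; rewrite meval_poly mconst_poly.
by rewrite -meval_poly meval_polyC.
Qed.

Lemma meval_var m i : (i < m)%N -> meval phi z (mvar R m i) = z i.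
Proof.
elim: m => [|k IH] //; rewrite ltnS leq_eqVlt => /orP[/eqP->|hi].
  rewrite mvar_last [LHS]/= size_polyX !big_ord_recr big_ord0 /= !coefX /=.
  by rewrite meval0 -(mconst1 k) meval_const rmorph1 add0r mul0r add0r mul1r expr1.
by rewrite mvar_lt // meval_polyC IH.
Qed.
End Eval.
End P.


Section Proj2.
Variables (R : rcfType) (n : nat).
Local Notation S := (Spoly R n).
Local Notation x := (xv R n).
Local Notation hom := (@mhomog R n.+1).

Lemma linformD (a b : 'rV[R]_n.+1) : linform (a + b) = linform a + linform b.
Proof.
rewrite /linform -big_split; apply: eq_bigr => i _.
by rewrite mxE mconstD mulrDl.
Qed.

Lemma linformZ c (a : 'rV[R]_n.+1) : linform (c *: a) = mconst n.+1 c * linform a.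
Proof.
rewrite /linform mulr_sumr; apply: eq_bigr => i _.
by rewrite mxE mconstM mulrA.
Qed.

Lemma linform0 : linform (0 : 'rV[R]_n.+1) = 0.
Proof. by rewrite /linform big1 // => i _; rewrite mxE mconst0 mul0r. Qed.

Lemma hom_add d (f g : S) : hom d f -> hom d g -> hom d (f + g).
Proof. by rewrite /mhomog hcompD => -> ->. Qed.
Lemma hom_opp d (f : S) : hom d f -> hom d (- f).
Proof. by rewrite /mhomog hcompN => ->. Qed.
Lemma hom_sub d (f g : S) : hom d f -> hom d g -> hom d (f - g).
Proof. by move=> hf hg; apply: hom_add => //; apply: hom_opp. Qed.
Lemma hom_zero d : hom d (0 : S).
Proof. by rewrite /mhomog hcomp0. Qed.
Lemma hom_cm d c (f : S) : hom d f -> hom d (mconst n.+1 c * f).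
Proof. by rewrite /mhomog hcompC => ->. Qed.
Lemma hom_sum d (I : Type) (s : seq I) (F : I -> S) :
  (forall t, hom d (F t)) -> hom d (\sum_(t <- s) F t).
Proof.
move=> hF; elim: s => [|a s IH]; first by rewrite big_nil; apply: hom_zero.
by rewrite big_cons; apply: hom_add.
Qed.
Lemma hom_x d (i : 'I_n.+1) (f : S) : hom d f -> hom d.+1 (x i * f).
Proof. by rewrite /mhomog /xv (proj1 (hcompX _ _ (ltn_ord i))) => ->. Qed.
Lemma hom1_x (i : 'I_n.+1) : hom 1 (x i).
Proof.
rewrite -[x i]mulr1; apply: hom_x.
by rewrite /mhomog -(mconst1 _ n.+1) hcomp_const.
Qed.
Lemma hom1_linform a : hom 1 (linform a).
Proof.
apply: hom_sum => i; rewrite mulrC; apply: hom_x.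
by rewrite /mhomog hcomp_const.
Qed.
Lemma hcomp_linform d a (g : S) :
  hcomp d.+1 (linform a * g) = linform a * hcomp d g.
Proof.
rewrite /linform !mulr_suml hcomp_sum; apply: eq_bigr => i _.
by rewrite -mulrA hcompC /xv (proj1 (hcompX _ _ (ltn_ord i))) mulrA.
Qed.
Lemma hom_linform_mul d a (g : S) : hom d g -> hom d.+1 (linform a * g).
Proof. by rewrite /mhomog hcomp_linform => ->. Qed.

Lemma hom1_rep (u : S) : hom 1 u -> exists a, u = linform a.
Proof.
move=> /hom_decomp [h [hh ->]].
have hc : forall i : 'I_n.+1, exists c, h i = mconst n.+1 c.
  by move=> i; apply: hom0_const.
have [c hc'] := fin_all_exists hc.
exists (\row_(i < n.+1) c i).
rewrite /linform; apply: eq_bigr => i _; rewrite mxE.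
by rewrite hc' mulrC.
Qed.

Definition Phi (M : 'M[R]_n.+1) : S := \sum_(i < n.+1) x i * linform (row i M).

Lemma hom2_rep (u : S) : hom 2 u -> exists M, Phi M = u.
Proof.
move=> /hom_decomp [h [hh ->]].
have hc : forall i : 'I_n.+1, exists a, h i = linform a.
  by move=> i; apply: hom1_rep.
have [c hc'] := fin_all_exists hc.
exists (\matrix_(i < n.+1) c i).
by rewrite /Phi; apply: eq_bigr => i _; rewrite rowK hc'.
Qed.

Lemma PhiD M1 M2 : Phi (M1 + M2) = Phi M1 + Phi M2.
Proof.
by rewrite /Phi -big_split; apply: eq_bigr => i _; rewrite linearD linformD mulrDr.
Qed.
Lemma PhiZ c M : Phi (c *: M) = mconst n.+1 c * Phi M.
Proof.
rewrite /Phi mulr_sumr; apply: eq_bigr => i _.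
by rewrite linearZ linformZ mulrCA.
Qed.
Lemma Phi0 : Phi 0 = 0.
Proof. by rewrite /Phi big1 // => i _; rewrite linear0 linform0 mulr0. Qed.
Lemma PhiN M : Phi (- M) = - Phi M.
Proof. by apply/eqP; rewrite -subr_eq0 opprK -PhiD addNr Phi0. Qed.
Lemma PhiB M1 M2 : Phi (M1 - M2) = Phi M1 - Phi M2.
Proof. by rewrite PhiD PhiN. Qed.
Lemma hom2_Phi M : hom 2 (Phi M).
Proof. by apply: hom_sum => i; apply: hom_x; apply: hom1_linform. Qed.

Lemma Phi_outer (w b : 'rV[R]_n.+1) : Phi (w^T *m b) = linform w * linform b.
Proof.
rewrite /Phi [linform w]/linform mulr_suml; apply: eq_bigr => i _.
have -> : row i (w^T *m b) = w 0 i *: b.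
  by apply/rowP => j; rewrite !mxE big_ord1 !mxE.
by rewrite linformZ mulrCA mulrA.
Qed.
End Proj2.


Section Dual.
Variables (R : rcfType) (n : nat).
Local Notation S := (Spoly R n).
Local Notation x := (xv R n).
Variable l : S -> R.
Hypothesis hl : is_dual2 l.

Lemma dual_0 : l 0 = 0.
Proof.
have := (proj2 hl) 0 0 (hom_zero _ _ _); rewrite mconst0 mul0r mul0r; exact.
Qed.

Lemma dual_sum (I : Type) (s : seq I) (F : I -> S) :
  (forall t, hom2 (F t)) -> l (\sum_(t <- s) F t) = \sum_(t <- s) l (F t).
Proof.
move=> hF; elim: s => [|a s IH]; first by rewrite !big_nil dual_0.
rewrite !big_cons (proj1 hl) ?IH //; exact: hom_sum.
Qed.

Lemma dual_N q : hom2 q -> l (- q) = - l q.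
Proof.
move=> hq; rewrite -mulN1r -(mconst1 _ n.+1) -mconstN (proj2 hl) //.
by rewrite mulN1r.
Qed.

Lemma dual_B q1 q2 : hom2 q1 -> hom2 q2 -> l (q1 - q2) = l q1 - l q2.
Proof.
by move=> h1 h2; rewrite (proj1 hl) ?dual_N //; apply: hom_opp.
Qed.

Lemma hom2_xx (i j : 'I_n.+1) : hom2 (x i * x j).
Proof. by apply: hom_x; apply: hom1_x. Qed.

Lemma dual_Phi M : l (Phi M) = \sum_i \sum_j M i j * l (x i * x j).
Proof.
rewrite /Phi dual_sum; last by move=> i; apply: hom_x; apply: hom1_linform.
apply: eq_bigr => i _; rewrite /linform mulr_sumr dual_sum.
  apply: eq_bigr => j _; rewrite mxE mulrCA (proj2 hl) //; exact: hom2_xx.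
by move=> j; rewrite mulrCA; apply: hom_cm; apply: hom2_xx.
Qed.

Lemma dual_outer (w b : 'rV[R]_n.+1) :
  l (linform w * linform b) = (w *m Bmx l *m b^T) 0 0.
Proof.
rewrite -Phi_outer dual_Phi.
have -> : (w *m Bmx l *m b^T) 0 0 =
    \sum_i \sum_j w 0 i * b 0 j * l (x i * x j).
  rewrite mxE (eq_bigr (fun j => \sum_i w 0 i * b 0 j * l (x i * x j))); last first.
    by move=> j _; rewrite !mxE mulr_suml; apply: eq_bigr => i _; rewrite !mxE; ring.
  exact: exchange_big.
by apply: eq_bigr => i _; apply: eq_bigr => j _; rewrite !mxE big_ord1 !mxE.
Qed.

Lemma Bmx_sym : (Bmx l)^T = Bmx l.
Proof. by apply/matrixP => i j; rewrite !mxE mulrC. Qed.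

Lemma dual_linsq (a : 'rV[R]_n.+1) :
  l (linform a ^+ 2) = (a *m Bmx l *m a^T) 0 0.
Proof. by rewrite expr2 dual_outer. Qed.
End Dual.


Section LA.
Variable R : realFieldType.

Lemma quad_disc (a b c : R) : 0 <= c ->
  (forall t, 0 <= a + 2%:R * t * b + t ^+ 2 * c) -> b ^+ 2 <= a * c.
Proof.
move=> hc0 h; case: (ltrgtP c 0) => hc; first by lra.
- have := h (- b / c); set t := - b / c => ht.
  have e : t * c = - b by rewrite /t divfK ?gt_eqF.
  have : 0 <= (a + 2%:R * t * b + t ^+ 2 * c) * c by apply: mulr_ge0 => //; apply: ltW.
  have -> : (a + 2%:R * t * b + t ^+ 2 * c) * c = a * c + 2%:R * (t * c) * b + (t * c) ^+ 2.
    by ring.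
  by rewrite e; nra.
- rewrite hc mulr0; have [->|hb] := eqVneq b 0; first by rewrite expr0n.
  exfalso; have := h (- (a + 1) / (2%:R * b)); rewrite hc mulr0 addr0.
  have -> : 2%:R * (- (a + 1) / (2%:R * b)) * b = - (a + 1).
    by field.
  lra.
Qed.

Lemma abs_prod_le (x y : R) : `|x * y| <= x ^+ 2 + y ^+ 2.
Proof.
rewrite normrM -(real_normK (num_real x)) -(real_normK (num_real y)).
have hx := normr_ge0 x; have hy := normr_ge0 y; nra.
Qed.

Variable N : nat.
Definition bf (B : 'M[R]_N) (u v : 'rV[R]_N) := (u *m B *m v^T) 0 0.

Lemma bfDl B u1 u2 v : bf B (u1 + u2) v = bf B u1 v + bf B u2 v.
Proof. by rewrite /bf !mulmxDl mxE. Qed.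
Lemma bfDr B u v1 v2 : bf B u (v1 + v2) = bf B u v1 + bf B u v2.
Proof. by rewrite /bf linearD /= mulmxDr mxE. Qed.
Lemma bfZl B c u v : bf B (c *: u) v = c * bf B u v.
Proof. by rewrite /bf -!scalemxAl mxE. Qed.
Lemma bfZr B c u v : bf B u (c *: v) = c * bf B u v.
Proof. by rewrite /bf linearZ /= -scalemxAr mxE. Qed.
Lemma bf_sym B u v : B^T = B -> bf B u v = bf B v u.
Proof.
move=> hB; have e : forall A : 'M[R]_1, A 0 0 = A^T 0 0 by move=> A; rewrite mxE.
by rewrite /bf e !trmx_mul trmxK hB mulmxA.
Qed.

Lemma bf_e_l B u (k : 'I_N) : bf B u (delta_mx 0 k) = (u *m B) 0 k.
Proof. by rewrite /bf trmx_delta -colE mxE. Qed.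

Lemma bf_ee B (k : 'I_N) : bf B (delta_mx 0 k) (delta_mx 0 k) = B k k.
Proof. by rewrite bf_e_l -rowE mxE. Qed.

Lemma psd_cs (B : 'M[R]_N) (a : 'rV_N) (k : 'I_N) :
  (forall u, 0 <= bf B u u) -> B^T = B ->
  ((a *m B) 0 k) ^+ 2 <= B k k * bf B a a.
Proof.
move=> hpsd hB; apply: quad_disc => // t.
have := hpsd (delta_mx 0 k + t *: a).
rewrite !bfDl !bfDr !bfZl !bfZr bf_ee (bf_sym _ _ hB) bf_e_l.
set v := (a *m B) 0 k; set q := bf B a a.
have -> : B k k + t * v + (t * v + t * (t * q)) = B k k + 2%:R * t * v + t ^+ 2 * q by rewrite /v /q; ring.
by [].
Qed.

Lemma psd_bound (B M : 'M[R]_N) :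
  (forall u, 0 <= bf B u u) -> B^T = B -> M^T = M ->
  (forall w : 'rV_N, w *m B = 0 -> w *m M = 0) ->
  exists K, 0 < K /\ forall a, `|bf M a a| <= K * bf B a a.
Proof.
move=> hpsd hB hM hker.
have hCB : (cokermx B)^T *m B = 0.
  by rewrite -{2}hB -trmx_mul mulmx_coker trmx0.
have hCM : (cokermx B)^T *m M = 0.
  apply/row_matrixP => i; rewrite row_mul row0; apply: hker.
  by rewrite -row_mul hCB row0.
have hsub : (M <= B)%MS.
  by rewrite submxE; apply/eqP; rewrite -[M]hM -(trmxK (cokermx B)) -trmx_mul hCM trmx0.
set P := pinvmx B.
have e1 : M = M *m P *m B by rewrite mulmxKpV.
set Y := P^T *m M *m P.
have e2 : M = B *m Y *m B.
  have e3 : M = B *m P^T *m M.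
    by rewrite -{1}hM {1}e1 !trmx_mul hB hM mulmxA.
  by rewrite {1}e3 {1}e1 /Y !mulmxA.
set K := 1 + \sum_k \sum_l `|Y k l| * (B k k + B l l).
have hBd : forall k, 0 <= B k k by move=> k; rewrite -bf_ee.
have hK0 : 0 <= \sum_k \sum_l `|Y k l| * (B k k + B l l).
  apply: sumr_ge0 => k _; apply: sumr_ge0 => l _.
  by apply: mulr_ge0; [exact: normr_ge0 | apply: addr_ge0].
exists K; split; first by rewrite /K; lra.
move=> a; set v := a *m B; set q := bf B a a.
have hq : 0 <= q by apply: hpsd.
have hv : forall k, v 0 k ^+ 2 <= B k k * q by move=> k; apply: psd_cs.
have ebf : bf M a a = \sum_k \sum_l v 0 k * Y k l * v 0 l.
  rewrite /bf e2.
  have -> : a *m (B *m Y *m B) *m a^T = v *m Y *m v^T.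
    by rewrite /v trmx_mul hB !mulmxA.
  rewrite mxE; under eq_bigr do rewrite mxE mulr_suml.
  rewrite exchange_big /=; apply: eq_bigr => k _; apply: eq_bigr => l _.
  by rewrite !mxE.
rewrite ebf; apply: (le_trans (ler_norm_sum _ _ _)).
apply: (@le_trans _ _ (\sum_k \sum_l `|Y k l| * (B k k + B l l) * q)).
  apply: ler_sum => k _; apply: (le_trans (ler_norm_sum _ _ _)).
  apply: ler_sum => l _.
  rewrite mulrAC normrM mulrC -mulrA; apply: ler_wpM2l; first exact: normr_ge0.
  apply: (le_trans (abs_prod_le _ _)); have := hv k; have := hv l; lra.
rewrite (eq_bigr (fun k => (\sum_l `|Y k l| * (B k k + B l l)) * q)); last first.
  by move=> k _; rewrite mulr_suml.
rewrite -mulr_suml /K mulrDl mul1r; lra.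
Qed.
End LA.


Section Sep.
Variables (F : fieldType) (D : nat) (P : 'rV[F]_D -> Prop).
Hypotheses (P0 : P 0) (PD : forall u v, P u -> P v -> P (u + v))
  (PZ : forall c u, P u -> P (c *: u)).

Lemma span_rows k (U : 'M[F]_(k, D)) : (forall i, P (row i U)) ->
  forall u, (u <= U)%MS -> P u.
Proof.
move=> hU u /submxP [y ->]; rewrite mulmx_sum_row.
by apply: (big_ind P) => // i _; apply: PZ.
Qed.

Lemma grow j : (exists k (U : 'M[F]_(k, D)), (forall i, P (row i U)) /\ (j <= \rank U)%N)
  \/ (exists k (U : 'M[F]_(k, D)), (forall i, P (row i U)) /\ forall u, P u -> (u <= U)%MS).
Proof.
elim: j => [|j [[k [U [hU hr]]]|]]; last by right.
  by left; exists 0%N, 0; split => // i; case: i.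
case: (classic (forall u, P u -> (u <= U)%MS)) => hc; first by right; exists k, U.
left; have [u [hu hnu]] : exists u, P u /\ ~~ (u <= U)%MS.
  apply: NNPP => hne; apply: hc => u hu; apply: NNPP => hn; apply: hne.
  by exists u; split => //; apply/negP.
exists (k + 1)%N, (col_mx U u); split.
  move=> i; case: (split_ordP i) => l ->; first by rewrite rowKu.
  by rewrite rowKd; have -> : row l u = u by apply/rowP => m; rewrite mxE (ord1 l).
have hlt : (U < col_mx U u)%MS.
  have h1 : (U <= col_mx U u)%MS by rewrite -(addsmxE U u) addsmxSl.
  by rewrite ltmxE h1 /= col_mx_sub negb_and hnu orbT.
by apply: leq_trans (rank_ltmx hlt).
Qed.

Lemma separate v : ~ P v ->
  exists mu : 'cV[F]_D, (forall u, P u -> u *m mu = 0) /\ v *m mu != 0.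
Proof.
move=> hv; have [[k [U [_ hr]]]|[k [U [hU hsub]]]] := grow D.+1.
  by have := rank_leq_col U; lia.
have hvU : ~~ (v <= U)%MS by apply/negP => h; apply: hv; apply: span_rows h.
rewrite submxE in hvU.
have [j hj] : exists j, (v *m cokermx U) 0 j != 0.
  case: (pickP (fun j => (v *m cokermx U) 0 j != 0)) => [j hj|h]; first by exists j.
  exfalso; move/negP: hvU; apply; apply/eqP/rowP => j.
  by move: (h j) => /negbFE /eqP ->; rewrite mxE.
exists (col j (cokermx U)); split.
  move=> u hu; have := hsub _ hu; rewrite submxE => /eqP h.
  by rewrite colE mulmxA h mul0mx.
apply/eqP => h; move/eqP: hj; apply.
by move: (congr1 (fun A : 'M[F]_1 => A 0 0) h); rewrite colE mulmxA -colE !mxE.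
Qed.
End Sep.


Section Ker.
Variables (F : fieldType) (N : nat) (B : 'M[F]_N).
Definition kerW : {vspace 'rV[F]_N} := lker (linfun (mulmxr B) : 'Hom('rV[F]_N, 'rV[F]_N)).

Lemma mem_kerW w : (w \in kerW) = (w *m B == 0).
Proof. by rewrite memv_ker lfunE. Qed.

Lemma kerW_dim : (N - \dim kerW <= \rank B)%N.
Proof.
set f := (linfun (mulmxr B) : 'Hom('rV[F]_N, 'rV[F]_N)).
have h := limg_ker_dim f fullv; rewrite capfv dimvf dim_matrix in h.
set X := [seq row i (row_base B) | i <- enum 'I_(\rank B)].
have hs : (f @: fullv <= <<X>>)%VS.
  apply/subvP => u /memv_imgP [w _ ->]; rewrite lfunE /=.
  have : (w *m B <= row_base B)%MS by rewrite eq_row_base submxMl.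
  case/submxP => y ->; rewrite mulmx_sum_row; apply: memv_suml => i _.
  by apply: memvZ; apply: memv_span; apply: map_f; rewrite mem_enum.
have := dimvS hs; have := dim_span X; rewrite size_map size_enum_ord.
move: h; rewrite /kerW -/f mul1r => h h1 h2; rewrite -{1}h addKn; exact: leq_trans h2 h1.
Qed.
End Ker.


Section Main.
Variables (R : rcfType) (n : nat) (I : Spoly R n -> Prop).
Local Notation S := (Spoly R n).
Local Notation x := (xv R n).

Lemma hom2_sq (a : 'rV[R]_n.+1) : hom2 (linform a ^+ 2).
Proof. by rewrite expr2; apply: hom_linform_mul; apply: hom1_linform. Qed.

Lemma dual_sos (f : S -> R) (s : seq 'rV[R]_n.+1) : is_dual2 f ->
  f (\sum_(a <- s) linform a ^+ 2) = \sum_(a <- s) bf (Bmx f) a a.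
Proof.
move=> hf; rewrite (dual_sum hf); last by move=> a; apply: hom2_sq.
by apply: eq_bigr => a _; rewrite (dual_linsq hf).
Qed.

Lemma psd_of (l : S -> R) : in_sos_dual I l -> forall u, 0 <= bf (Bmx l) u u.
Proof.
case=> hd _ hp u; have := hp [:: u]; rewrite (dual_sos _ hd) big_seq1; exact.
Qed.

Lemma perturb (l m : S -> R) : extreme_ray I l -> is_dual2 m ->
  (forall q, hom2 q -> I q -> m q = 0) ->
  (forall w : 'rV_n.+1, w *m Bmx l = 0 -> w *m Bmx m = 0) ->
  forall q, hom2 q -> l q = 0 -> m q = 0.
Proof.
case=> hsos _ hext hm hmI hker q hq hlq.
have [hl hlI _] := hsos.
have [K [hK hb]] := psd_bound (psd_of hsos) (Bmx_sym l) (Bmx_sym m) hker.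
set e := K^-1.
have he : 0 < e by rewrite /e invr_gt0.
have hterm : forall a, 0 <= bf (Bmx l) a a + e * bf (Bmx m) a a /\
                       0 <= bf (Bmx l) a a - e * bf (Bmx m) a a.
  move=> a; have h1 := hb a; set y := bf (Bmx m) a a; set u := bf (Bmx l) a a.
  have h2 : e * `|y| <= u.
    have : e * `|y| <= e * (K * u) by apply: ler_wpM2l => //; apply: ltW.
    by rewrite mulrA /e mulVf ?gt_eqF // mul1r.
  have h3 := ler_norm y; have h4 := ler_norm (- y); rewrite normrN in h4.
  have h5 : e * y <= e * `|y| by apply: ler_wpM2l => //; apply: ltW.
  have h6 : e * (- y) <= e * `|y| by apply: ler_wpM2l => //; apply: ltW.
  rewrite mulrN in h6; split; lra.
have hsX : forall s : R, (forall a, 0 <= bf (Bmx l) a a + s * bf (Bmx m) a a) ->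
    in_sos_dual I (fun u => (l u + s * m u) / 2%:R).
  move=> s hs; split.
  - split.
      move=> q1 q2 h1 h2; rewrite (proj1 hl) // (proj1 hm) //. move: (l q1) (l q2) (m q1) (m q2) => a1 a2 a3 a4; ring.
    move=> c q1 h1; rewrite (proj2 hl) // (proj2 hm) //; move: (l q1) (m q1) => a1 a3; ring.
  - by move=> u hu hIu; rewrite hlI // hmI // mulr0 addr0 mul0r.
  move=> t; rewrite (dual_sos _ hl) (dual_sos _ hm) mulr_sumr -big_split /=.
  apply: divr_ge0; last by rewrite ler0n.
  by apply: sumr_ge0 => a _.
pose l1 := fun u => (l u + e * m u) / 2%:R.
pose l2 := fun u => (l u + (- e) * m u) / 2%:R.
have hs1 : in_sos_dual I l1 by apply: hsX => a; case: (hterm a).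
have hs2 : in_sos_dual I l2 by apply: hsX => a; rewrite mulNr; case: (hterm a).
have hsum : eq2 l (fun q => l1 q + l2 q).
  move=> u _; rewrite /l1 /l2; move: (l u) (m u) => a b; by field.
have [c hc0 hc] := hext l1 l2 hs1 hs2 hsum.
have := hc q hq; rewrite /l1 hlq mulr0 add0r => h.
have : e * m q = 0.
  by move/eqP: h; rewrite mulf_eq0 invr_eq0 pnatr_eq0 orbF => /eqP.
by move/eqP; rewrite mulf_eq0 gt_eqF //= => /eqP.
Qed.
End Main.


Lemma Phi_sum (R : rcfType) (n : nat) (J : Type) (s : seq J) (F : J -> 'M[R]_n.+1) :
  Phi (\sum_(t <- s) F t) = \sum_(t <- s) Phi (F t).
Proof.
elim: s => [|a s IH]; first by rewrite !big_nil Phi0.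
by rewrite !big_cons PhiD IH.
Qed.

Section Claim.
Variables (R : rcfType) (n : nat) (I : Spoly R n -> Prop).
Variables (C : closedFieldType) (phi : {rmorphism R -> C}) (zz : nat -> C).
Local Notation S := (Spoly R n).
Local Notation E := (@meval _ _ phi n.+1 zz).
Hypothesis hI : is_ideal I.
Hypothesis hpt : forall f, I f -> E f = 0.
Variable l : S -> R.
Hypothesis hext : extreme_ray I l.
Local Notation W := (kerW (Bmx l)).
Hypothesis hW : forall w, w \in W -> E (linform w) = 0.

Definition Kp (M : 'M[R]_n.+1) := exists M1 (s : seq ('rV[R]_n.+1 * 'rV[R]_n.+1)),
  [/\ I (Phi M1), (forall t, t \in s -> t.1 \in W) & M = M1 + \sum_(t <- s) t.1^T *m t.2].

Lemma Kp0 : Kp 0.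
Proof.
exists 0, [::]; split => //; first by rewrite Phi0; case: hI.
by rewrite big_nil addr0.
Qed.

Lemma KpD M M' : Kp M -> Kp M' -> Kp (M + M').
Proof.
case=> [M1 [s [h1 h2 ->]]] [M1' [s' [h1' h2' ->]]].
exists (M1 + M1'), (s ++ s'); split.
- by rewrite PhiD; case: hI => _ hD _; apply: hD.
- by move=> t; rewrite mem_cat => /orP[]; [apply: h2 | apply: h2'].
by rewrite big_cat /=; rewrite addrACA.
Qed.

Lemma KpZ c M : Kp M -> Kp (c *: M).
Proof.
case=> [M1 [s [h1 h2 ->]]].
exists (c *: M1), [seq (c *: t.1, t.2) | t <- s]; split.
- by rewrite PhiZ; case: hI => _ _ hM; apply: hM.
- move=> t /mapP [t' ht' ->] /=; apply: memvZ; exact: h2.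
rewrite big_map scalerDr scaler_sumr; congr (_ + _); apply: eq_bigr => t _ /=.
by rewrite linearZ /= scalemxAl.
Qed.

Lemma EK M : Kp M -> E (Phi M) = 0.
Proof.
case=> [M1 [s [h1 h2 ->]]].
rewrite PhiD Phi_sum mevalD hpt // add0r meval_sum big_seq big1 // => t ht.
by rewrite Phi_outer mevalM hW ?mul0r //; apply: h2.
Qed.

Lemma claim q : hom2 q -> l q = 0 -> E q = 0.
Proof.
move=> hq hlq; apply: NNPP => hEq.
have [Mq hMq] := hom2_rep hq.
pose P v := Kp (vec_mx v).
have hP0 : P 0 by rewrite /P linear0; apply: Kp0.
have hPD : forall u v, P u -> P v -> P (u + v).
  by move=> u v hu hv; rewrite /P linearD; apply: KpD.
have hPZ : forall c u, P u -> P (c *: u).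
  by move=> c u hu; rewrite /P linearZ; apply: KpZ.
have hnP : ~ P (mxvec Mq).
  by rewrite /P mxvecK => /EK; rewrite hMq.
have [mu [hmu hmuq]] := separate hP0 hPD hPZ hnP.
pose mm (M : 'M[R]_n.+1) := (mxvec M *m mu) 0 0.
have mm0 : forall M, Kp M -> mm M = 0.
  by move=> M hM; rewrite /mm hmu ?mxE // /P mxvecK.
have mmD : forall M M', mm (M + M') = mm M + mm M'.
  by move=> M M'; rewrite /mm linearD mulmxDl mxE.
have mmZ : forall c M, mm (c *: M) = c * mm M.
  by move=> c M; rewrite /mm linearZ /= -scalemxAl mxE.
have mmB : forall M M', mm (M - M') = mm M - mm M'.
  by move=> M M'; rewrite mmD -scaleN1r mmZ mulN1r.
pose m (u : S) := mm (epsilon (inhabits 0) (fun M => Phi M = u)).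
have mPhi : forall M, m (Phi M) = mm M.
  move=> M; rewrite /m; set M' := epsilon _ _.
  have hM' : Phi M' = Phi M by apply: (epsilon_spec (inhabits 0) (fun M0 => Phi M0 = Phi M)); exists M.
  apply/eqP; rewrite -subr_eq0 -mmB; apply/eqP; apply: mm0.
  exists (M' - M), [::]; split => //; last by rewrite big_nil addr0.
  by rewrite PhiB hM' subrr; case: hI.
have hmd : is_dual2 m.
  split.
    move=> q1 q2 /hom2_rep [M1 <-] /hom2_rep [M2 <-].
    by rewrite -PhiD !mPhi mmD.
  by move=> c q1 /hom2_rep [M1 <-]; rewrite -PhiZ !mPhi mmZ.
have hmI : forall u, hom2 u -> I u -> m u = 0.
  move=> u /hom2_rep [M <-] hIM; rewrite mPhi; apply: mm0.
  exists M, [::]; split => //; by rewrite big_nil addr0.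
have hker : forall w : 'rV_n.+1, w *m Bmx l = 0 -> w *m Bmx m = 0.
  move=> w hw; have hwW : w \in W by rewrite mem_kerW hw.
  apply/rowP => j; rewrite [RHS]mxE -bf_e_l /bf -(dual_outer hmd) -Phi_outer mPhi.
  apply: mm0; exists 0, [:: (w, delta_mx 0 j)]; split.
  - by rewrite Phi0; case: hI.
  - by move=> t; rewrite inE => /eqP -> /=.
  by rewrite big_seq1 add0r.
have := perturb hext hmd hmI hker hq hlq.
rewrite -hMq mPhi => h; move: hmuq; rewrite /mm in h.
case/negP; apply/eqP/matrixP => i j; rewrite (ord1 i) (ord1 j) h mxE //.
Qed.
End Claim.


Theorem theorem2p2 (R : rcfType) (C : closedFieldType) (phi : {rmorphism R -> C})
    (n : nat) (I : Spoly R n -> Prop) (p : nat) :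
  is_subscheme_ideal I ->
  nondegenerate_scheme I ->
  (1 <= p)%N ->
  p_bpf_property phi I p ->
  hankel_index_ge I p.+1.
Proof.
move=> [[hI hIhom] _] _ _ hbpf r hr [l [hext hrank]].
rewrite leqNgt; apply/negP => hrp.
have [hsos hnz _] := hext.
have [hl hlI _] := hsos.
set B := Bmx l.
have hcodim : (n.+1 - \dim (kerW B) <= p)%N.
  have := kerW_dim B; rewrite /rank_of in hrank; rewrite /B hrank; lia.
have hbpfW : base_point_free phi I (kerW B).
  move=> z [[i hzi] hzI].
  set zz := fun k => if (k < n.+1)%N then z (inord k) else 0.
  apply: NNPP => hne.
  have hW : forall w, w \in kerW B -> @meval _ _ phi n.+1 zz (linform w) = 0.
    move=> w hw; apply: NNPP => h; apply: hne; exists w => //; exact/eqP.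
  have hcl := claim hI hzI hext hW.
  have hx : forall j : 'I_n.+1, @meval _ _ phi n.+1 zz (xv R n j) = z j.
    by move=> j; rewrite /xv meval_var // /zz ltn_ord inord_val.
  set a := l (xv R n i * xv R n i).
  have ha : a != 0.
    apply/eqP => ha; have := hcl _ (hom2_xx _ i i) ha.
    by rewrite mevalM !hx; apply/eqP; rewrite mulf_neq0.
  have hjk : forall j k : 'I_n.+1, phi a * (z j * z k) = phi (B j k) * (z i * z i).
    move=> j k; apply/eqP; rewrite -subr_eq0; apply/eqP.
    have hq : hom2 (mconst n.+1 a * (xv R n j * xv R n k)
                    - mconst n.+1 (B j k) * (xv R n i * xv R n i)).
      by apply: hom_sub; apply: hom_cm; apply: hom2_xx.
    have := hcl _ hq.
    rewrite (dual_B hl) ?(proj2 hl) ?mevalB ?mevalM ?meval_const ?hx;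
      try (apply: hom_cm; apply: hom2_xx); try apply: hom2_xx.
    by apply; rewrite /a /B mxE; ring.
  have hphia : phi a != 0 by rewrite fmorph_eq0.
  set c := (z i * z i) / phi a.
  have hc : c != 0 by rewrite /c mulf_neq0 ?invr_eq0 ?mulf_neq0.
  have hZ : (\col_j z j) *m (\row_k z k) = c *: map_mx phi B.
    apply/matrixP => j k; rewrite !mxE big_ord1 !mxE /c.
    apply: (mulfI hphia); rewrite hjk.
    have -> : l (xv R n j * xv R n k) = B j k by rewrite /B mxE.
    move: (phi (B j k)) (z i * z i) hphia => u v hp; by field.
  have := mxrankM_maxl (\col_j z j) (\row_k z k).
  rewrite hZ mxrank_scale_nz // mxrank_map => h1.
  have := rank_leq_col (\col_j z j); rewrite /rank_of in hrank.
  rewrite -/B in hrank; lia.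
have hR2 := hbpf _ hcodim hbpfW.
apply: hnz => q hq; have [s [hs hIs]] := hR2 q hq.
have hIg := hIhom _ 2 hIs.
rewrite hcompB hq hcomp_sum in hIg.
rewrite (eq_bigr (fun t => linform t.1 * hcomp 1 t.2)) in hIg; last by move=> t _; rewrite hcomp_linform.
have hh1 : forall g : Spoly R n, mhomog 1 (hcomp 1 g) by move=> g; rewrite /mhomog hcompK.
have hhom : forall t : 'rV[R]_n.+1 * Spoly R n, hom2 (linform t.1 * hcomp 1 t.2).
  by move=> t; apply: hom_linform_mul.
have hsum : hom2 (\sum_(t <- s) linform t.1 * hcomp 1 t.2) by apply: hom_sum.
have hg : hom2 (q - \sum_(t <- s) linform t.1 * hcomp 1 t.2) by apply: hom_sub.
have e : q = (q - \sum_(t <- s) linform t.1 * hcomp 1 t.2)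
           + \sum_(t <- s) linform t.1 * hcomp 1 t.2 by rewrite subrK.
rewrite e (proj1 hl) // hlI // add0r (dual_sum hl) // big_seq big1 // => t ht.
have [b hb] := hom1_rep (hh1 t.2).
have := hs t ht; rewrite mem_kerW => /eqP hw.
by rewrite hb (dual_outer hl) -/B hw !mul0mx mxE.
Qed.
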